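(* Let $G\in\mathcal{G}_3$ and let $x$ be an interior vertex of $G$, i.e. $S(x)\in\mathcal{S}_2$. For $k\ge0$ let $V_k$ denote the number of complete subgraphs $K_{k+1}$ of $S(x)$. Then the curvature $K(x)=1-\frac{V_0}{2}+\frac{V_1}{3}-\frac{V_2}{4}$ equals $0$.
   Context: All graphs are finite simple graphs $G=(V,E)$. For a vertex $x$, the unit sphere $S(x)$ is the subgraph induced by the neighbors of $x$. A graph is contractible if it is the one-vertex graph $K_1$, or, inductively, if there is a vertex $x$ such that both $S(x)$ and the subgraph induced by $V\setminus\{x\}$ are contractible. Let $\mathcal{G}_0$ be the class of graphs without edges, $\mathcal{S}_0\subset\mathcal{G}_0$ those with exactly two vertices, $\mathcal{B}_0\subset\mathcal{G}_0$ those with exactly one vertex. For $d\ge1$, inductively: $\mathcal{G}_d$ is the class of graphs in which every unit sphere $S(x)$ lies in $\mathcal{S}_{d-1}\cup\mathcal{B}_{d-1}$; the boundary $\delta G$ is the subgraph induced by vertices $x$ with $S(x)\in\mathcal{B}_{d-1}$, and the interior (the other vertices, those with $S(x)\in\mathcal{S}_{d-1}$) is required to be nonempty; $\mathcal{B}_d$ is the class of contractible graphs in $\mathcal{G}_d$ whose boundary lies in $\mathcal{S}_{d-1}$; $\mathcal{S}_d$ is the class of non-contractible graphs in $\mathcal{G}_d$ such that removing any single vertex (with its incident edges) yields a graph in $\mathcal{B}_d$. *)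

(* Defs.v *)
(* A finite simple graph is represented as the subgraph
   induced on a vertex set V : {set T} of an ambient graph (T, e) with
   e : rel T symmetric and irreflexive. *)
From mathcomp Require Import all_boot all_order all_algebra.
Set Implicit Arguments. Unset Strict Implicit. Unset Printing Implicit Defensive.

Section Graphs.
Variables (T : finType) (e : rel T).

Definition sphere (V : {set T}) (x : T) : {set T} := [set y in V | e x y].

Inductive contractible : {set T} -> Prop :=
| contr_K1 (x : T) : contractible [set x]
| contr_step (V : {set T}) (x : T) : x \in V -> contractible (sphere V x) ->
    contractible (V :\ x) -> contractible V.

Fixpoint classes (d : nat) :
  ({set T} -> Prop) * ({set T} -> Prop) * ({set T} -> Prop) :=
  match d with
  | 0 =>
    let G := fun V : {set T} => forall x y, x \in V -> y \in V -> ~~ e x y in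
    (G, (fun V => G V /\ #|V| = 2), (fun V => G V /\ #|V| = 1))
  | d'.+1 =>
    let '(_, S', B') := classes d' in
    let G := fun V : {set T} =>
      (forall x, x \in V -> S' (sphere V x) \/ B' (sphere V x)) /\
      (exists x, x \in V /\ S' (sphere V x)) in
    let B := fun V : {set T} =>
      contractible V /\ G V /\
      (exists D : {set T},
         (forall x, x \in D <-> (x \in V /\ B' (sphere V x))) /\ S' D) in
    let S := fun V : {set T} =>
      G V /\ ~ contractible V /\ (forall x, x \in V -> B (V :\ x)) in
    (G, S, B)
  end.

Definition Gcls d := (classes d).1.1.
Definition Scls d := (classes d).1.2.
Definition Bcls d := (classes d).2.

Definition is_clique (A : {set T}) : bool :=
  [forall a in A, forall b in A, (a != b) ==> e a b].

Definition num_cliques (W : {set T}) (k : nat) : nat :=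
  #|[set A : {set T} | (A \subset W) && (#|A| == k.+1) && is_clique A]|.

Local Open Scope ring_scope.
Definition curvature (V : {set T}) (x : T) : rat :=
  let W := sphere V x in
  1 - (num_cliques W 0)%:R / 2 + (num_cliques W 1)%:R / 3
    - (num_cliques W 2)%:R / 4.

End Graphs.

(* Main.v *)
Require Import Defs.
From mathcomp Require Import all_boot all_order all_algebra.
From mathcomp Require Import ring lra zify.
Set Implicit Arguments. Unset Strict Implicit. Unset Printing Implicit Defensive.
Import Order.TTheory GRing.Theory Num.Theory.

Section Aux.
Variables (T : finType) (e : rel T).
Hypothesis e_sym : symmetric e.
Hypothesis e_irr : irreflexive e.

Lemma cliqueP (A : {set T}) :
  reflect (forall a b, a \in A -> b \in A -> a != b -> e a b) (is_clique e A).
Proof.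
apply: (iffP forall_inP) => H.
  by move=> a b aA bA ab; move: (H a aA) => /forall_inP /(_ b bA) /implyP; apply.
by move=> a aA; apply/forall_inP => b bA; apply/implyP; apply: H.
Qed.

Local Open Scope ring_scope.

Definition SW (W : {set T}) (f : nat -> int) : int :=
  \sum_(B : {set T} | (B \subset W) && is_clique e B) f #|B|.

Lemma star (W : {set T}) a (f : nat -> int) : a \in W ->
  \sum_(B : {set T} | (B \subset W) && is_clique e B && (a \in B)) f #|B|
  = SW (sphere e W a) (fun n => f n.+1).
Proof.
move=> aW.
rewrite (reindex_onto (fun C => a |: C) (fun B => B :\ a)); last first.
  by move=> B /andP [_ aB]; apply/setP => y; rewrite !inE; case: eqP => [-> | ].
rewrite /SW; apply: eq_big => C; last first.
  move=> /andP [_ /eqP eqC].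
  have aC : a \notin C by rewrite -eqC !inE eqxx.
  by rewrite cardsU1 aC.
apply/idP/idP.
  move=> /andP [/andP [/andP [sW cl] _] /eqP eqC].
  have aC : a \notin C.
    by rewrite -eqC !inE eqxx.
  apply/andP; split.
    apply/subsetP => y yC; rewrite inE.
    have yW : y \in W by apply: (subsetP sW); rewrite !inE yC orbT.
    rewrite yW /=; move/cliqueP: cl; apply; rewrite ?inE ?eqxx ?yC ?orbT //.
    by apply/eqP => ay; rewrite ay yC in aC.
  apply/cliqueP => u v uC vC; move/cliqueP: cl; apply; by rewrite inE ?uC ?vC orbT.
move=> /andP [sS cl].
have aC : a \notin C.
  apply/negP => /(subsetP sS); by rewrite inE e_irr andbF.
rewrite setU1K // eqxx andbT setU11 andbT.
apply/andP; split.
  apply/subsetP => y; rewrite !inE => /orP [/eqP -> // | /(subsetP sS)].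
  by rewrite inE => /andP [].
apply/cliqueP => u v; rewrite !inE => /orP [/eqP -> | uC] /orP [/eqP -> | vC].
- by rewrite eqxx.
- by move=> _; move: (subsetP sS v vC); rewrite inE => /andP [].
- by move=> _; move: (subsetP sS u uC); rewrite inE e_sym => /andP [].
- by move/cliqueP: cl; apply.
Qed.

Lemma split_SW (W : {set T}) a (f : nat -> int) : a \in W ->
  SW W f = SW (W :\ a) f + SW (sphere e W a) (fun n => f n.+1).
Proof.
move=> aW; rewrite -star // /SW [LHS](bigID (fun B : {set T} => a \in B)) /= addrC; congr (_ + _).
by apply: eq_bigl => B; rewrite subsetD1 andbAC.
Qed.

Definition chi (W : {set T}) := SW W (fun n => (-1) ^+ n.+1).

Lemma split_chi (W : {set T}) a : a \in W -> chi W = chi (W :\ a) - chi (sphere e W a).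
Proof.
move=> aW; rewrite /chi (split_SW _ aW); congr (_ + _).
rewrite /SW -sumrN; apply: eq_bigr => B _; by rewrite exprS mulN1r.
Qed.

Lemma chi_contr (V : {set T}) : contractible e V -> chi V = 0.
Proof.
elim=> [x | V' x xV _ H1 _ H2].
  rewrite (split_chi (set11 x)).
  have -> : sphere e [set x] x = [set x] :\ x.
    by apply/setP => y; rewrite !inE; case: eqP => [-> | _] /=; rewrite ?e_irr.
  by rewrite subrr.
by rewrite (split_chi xV) H1 H2 subrr.
Qed.

Lemma chi0 : chi set0 = -1.
Proof.
rewrite /chi /SW (big_pred1 set0) ?cards0 ?expr1 //.
move=> B; rewrite subset0; rewrite /pred1 /=; case: (B =P set0) => [-> | _] //=.
by apply/cliqueP => a b; rewrite inE.
Qed.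

Lemma chi_noedge (A : {set T}) : (forall x y, x \in A -> y \in A -> ~~ e x y) ->
  chi A = (#|A|%:Z - 1).
Proof.
move: {2}#|A| (erefl #|A|) => n; elim: n A => [|n IH] A cA H.
  by rewrite (cards0_eq cA) chi0 cards0.
have [a aA] : exists a, a \in A.
  by apply/set0Pn; rewrite -card_gt0 cA.
rewrite (split_chi aA).
have -> : sphere e A a = set0.
  apply/setP => y; rewrite !inE; apply/negP => /andP [yA ea].
  by move: (H a y aA yA); rewrite ea.
have cA' : #|A :\ a| = n.
  by move: cA; rewrite (cardsD1 a A) aA add1n => -[].
rewrite chi0 (IH (A :\ a)) // ?cA' ?cA; first lia.
by move=> x y; rewrite !inE => /andP [_ xA] /andP [_ yA]; apply: H.
Qed.


Definition ind (m n : nat) : int := if n == m then 1 else 0.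

Lemma SW_ind0 (X : {set T}) : SW X (ind 0) = 1.
Proof.
rewrite /SW (bigD1 set0) /=; last by rewrite sub0set; apply/cliqueP => a b; rewrite inE.
rewrite cards0 /ind eqxx big1 ?addr0 // => B /andP [_ nB].
by rewrite cards_eq0 (negbTE nB).
Qed.

Lemma num_SW (X : {set T}) k : (num_cliques e X k)%:Z = SW X (ind k.+1).
Proof.
rewrite /num_cliques -sum1_card -natz natr_sum /SW big_mkcond [RHS]big_mkcond.
apply: eq_bigr => B _; rewrite inE /ind -andbA.
by case: (B \subset X); case: (is_clique e B); case: (#|B| == k.+1).
Qed.

Lemma chi_decomp (X : {set T}) :
  (forall B : {set T}, B \subset X -> is_clique e B -> #|B| <= 3)%N ->
  chi X = - SW X (ind 0) + SW X (ind 1) - SW X (ind 2) + SW X (ind 3).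
Proof.
move=> bnd; rewrite /chi /SW -!sumrN -!big_split /=; apply: eq_bigr => B /andP [sB cB].
move: (bnd B sB cB); case: #|B| => [|[|[|[|n]]]] //.
Qed.

Lemma dcount (W : {set T}) k :
  (k.+1)%:Z * SW W (ind k.+1) = \sum_(a in W) SW (sphere e W a) (ind k).
Proof.
rewrite /SW mulr_sumr.
have -> : \sum_(B : {set T} | (B \subset W) && is_clique e B) k.+1%:Z * ind k.+1 #|B| =
  \sum_(B : {set T} | (B \subset W) && is_clique e B) \sum_(a in W) (if a \in B then ind k.+1 #|B| else 0).
  apply: eq_bigr => B /andP [sB _]; rewrite -big_mkcondr /=.
  rewrite (eq_bigl (fun a => a \in B)); last first.
    by move=> a; apply/andP/idP => [[]//|aB]; split=> //; apply: (subsetP sB).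
  rewrite sumr_const /ind; case: eqP => [-> | _]; last by rewrite mul0rn mulr0.
  by rewrite mulr1 natz.
rewrite exchange_big /=; apply: eq_bigr => a aW.
rewrite -big_mkcondr /= star //; apply: eq_bigr => C _; by rewrite /ind eqSS.
Qed.

End Aux.

Section Cls.
Variables (T : finType) (e : rel T).
Hypothesis e_sym : symmetric e.
Hypothesis e_irr : irreflexive e.
Local Open Scope ring_scope.

Lemma Gsucc d (W : {set T}) : Gcls e d.+1 W <->
  (forall x, x \in W -> Scls e d (sphere e W x) \/ Bcls e d (sphere e W x)) /\
  (exists x, x \in W /\ Scls e d (sphere e W x)).
Proof. rewrite /Gcls /Scls /Bcls /=; case: (classes e d) => [[G S] B] /=; tauto. Qed.

Lemma Ssucc d (W : {set T}) : Scls e d.+1 W <->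
  Gcls e d.+1 W /\ ~ contractible e W /\ (forall x, x \in W -> Bcls e d.+1 (W :\ x)).
Proof. rewrite /Gcls /Scls /Bcls /=; case: (classes e d) => [[G S] B] /=; tauto. Qed.

Lemma Bsucc d (W : {set T}) : Bcls e d.+1 W -> contractible e W.
Proof. rewrite /Bcls /=; case: (classes e d) => [[G S] B] /=; tauto. Qed.

Lemma S1_prop (C : {set T}) : Scls e 1 C ->
  chi e C = -1 /\ forall v, v \in C -> Scls e 0 (sphere e C v).
Proof.
move=> /Ssucc [/Gsucc [Hall [u [uC Su]]] [_ HB]].
have chiC : chi e C = -1.
  rewrite (split_chi e_sym e_irr uC) (chi_contr e_sym e_irr (Bsucc (HB u uC))).
  by case: Su => [H2 c2]; rewrite (chi_noedge e_sym e_irr H2) c2.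
split=> // v vC; case: (Hall v vC) => // -[H1 c1].
move: chiC; rewrite (split_chi e_sym e_irr vC) (chi_contr e_sym e_irr (Bsucc (HB v vC))).
by rewrite (chi_noedge e_sym e_irr H1) c1.
Qed.

Lemma S2_prop (W : {set T}) : Scls e 2 W ->
  chi e W = 1 /\ forall v, v \in W -> Scls e 1 (sphere e W v).
Proof.
move=> /Ssucc [/Gsucc [Hall [u [uW Su]]] [_ HB]].
have chiW : chi e W = 1.
  rewrite (split_chi e_sym e_irr uW) (chi_contr e_sym e_irr (Bsucc (HB u uW))).
  by rewrite (S1_prop Su).1.
split=> // v vW; case: (Hall v vW) => // H1.
move: chiW; rewrite (split_chi e_sym e_irr vW) (chi_contr e_sym e_irr (Bsucc (HB v vW))).
by rewrite (chi_contr e_sym e_irr (Bsucc H1)).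
Qed.

End Cls.

Section Main.
Variables (T : finType) (e : rel T).
Hypothesis e_sym : symmetric e.
Hypothesis e_irr : irreflexive e.
Local Open Scope ring_scope.

Lemma noK4 (W : {set T}) : Scls e 2 W ->
  forall B : {set T}, B \subset W -> is_clique e B -> (#|B| <= 3)%N.
Proof.
move=> SW B sB cB; rewrite leqNgt; apply/negP => gt3.
have [a aB] : exists a, a \in B by apply/set0Pn; rewrite -card_gt0; lia.
have c1 : (2 < #|B :\ a|)%N by move: gt3; rewrite (cardsD1 a B) aB; lia.
have [b bB] : exists b, b \in B :\ a by apply/set0Pn; rewrite -card_gt0; lia.
have c2 : (1 < #|B :\ a :\ b|)%N by move: c1; rewrite (cardsD1 b (B :\ a)) bB; lia.
have [c cB0] : exists c, c \in B :\ a :\ b by apply/set0Pn; rewrite -card_gt0; lia.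
have c3 : (0 < #|B :\ a :\ b :\ c|)%N by move: c2; rewrite (cardsD1 c (B :\ a :\ b)) cB0; lia.
have [d dB] : exists d, d \in B :\ a :\ b :\ c by apply/set0Pn; rewrite -card_gt0; lia.
move: bB cB0 dB; rewrite !inE => /andP [ba bB'] /andP [cb /andP [ca cB']]
  /andP [dc /andP [db /andP [da dB']]].
have E : forall u v, u \in B -> v \in B -> u != v -> e u v by apply/cliqueP.
have aW : a \in W by apply: (subsetP sB).
have bW : b \in W by apply: (subsetP sB).
have cW : c \in W by apply: (subsetP sB).
have dW : d \in W by apply: (subsetP sB).
have [_ H2] := S2_prop e_sym e_irr SW.
have [_ H1] := S1_prop e_sym e_irr (H2 a aW).
have bS : b \in sphere e W a by rewrite inE bW E // eq_sym.
move: (H1 b bS); rewrite /Scls /= => -[H _].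
have bc : b != c by rewrite eq_sym.
have ac : a != c by rewrite eq_sym.
have ad : a != d by rewrite eq_sym.
have bd : b != d by rewrite eq_sym.
have cd : c != d by rewrite eq_sym.
have := H c d; rewrite !inE cW dW !E //.
by move=> /(_ isT isT).
Qed.

End Main.

Theorem mainTheorem4 (T : finType) (e : rel T)
  (e_sym : symmetric e) (e_irr : irreflexive e)
  (V : {set T}) (x : T) :
  Gcls e 3 V -> x \in V -> Scls e 2 (sphere e V x) ->
  curvature e V x = 0%R.
Proof.
move=> _ _ HSW; set W := sphere e V x.
have bnd := noK4 e_sym e_irr HSW.
have [chiW Hs] := S2_prop e_sym e_irr HSW.
have eq1 : ((num_cliques e W 0)%:Z - (num_cliques e W 1)%:Z + (num_cliques e W 2)%:Z = 2)%R.
  move: chiW; rewrite (chi_decomp bnd) SW_ind0 !num_SW -/W; lia.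
have N3 : SW e W (ind 4) = 0%R.
  rewrite /SW big1 // => B /andP [sB cB]; rewrite /ind.
  by have := bnd B sB cB; case: eqP => // ->.
have eq2 : (2 * (num_cliques e W 1)%:Z - 3 * (num_cliques e W 2)%:Z = 0)%R.
  have d1 := dcount e_sym e_irr W 1.
  have d2 := dcount e_sym e_irr W 2.
  have d3 := dcount e_sym e_irr W 3.
  have hsum : (\sum_(a in W) (SW e (sphere e W a) (ind 1) - SW e (sphere e W a) (ind 2)
       + SW e (sphere e W a) (ind 3)) = 0)%R.
    apply: big1 => a aW.
    have [ch _] := S1_prop e_sym e_irr (Hs a aW).
    have bnd' : forall B : {set T}, B \subset sphere e W a -> is_clique e B -> (#|B| <= 3)%N.
      move=> B sB cB; apply: bnd cB; apply: subset_trans sB _.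
      by apply/subsetP => y; rewrite inE => /andP [].
    move: ch; rewrite (chi_decomp bnd') SW_ind0; lia.
  move: hsum; rewrite big_split sumrB /= -d1 -d2 -d3 N3 !num_SW -/W; lia.
rewrite /curvature -/W.
have n1 : (num_cliques e W 0 + num_cliques e W 2 = 2 + num_cliques e W 1)%N by lia.
have n2 : (2 * num_cliques e W 1 = 3 * num_cliques e W 2)%N by lia.
have r1 : ((num_cliques e W 0)%:R + (num_cliques e W 2)%:R = 2 + (num_cliques e W 1)%:R :> rat)%R.
  by rewrite -!natrD n1.
have r2 : (2 * (num_cliques e W 1)%:R = 3 * (num_cliques e W 2)%:R :> rat)%R.
  by rewrite -!natrM n2.
lra.
Qed.
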